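(* Let $M$ be a matroid on $S$ and $N$ a matroid on $T$ with $S\cap T=\emptyset$, and let $L=M\mathbin{\Box} N$. A subset $A\neq S$ of $S\cup T$ is a cyclic flat of $L$ if and only if either $A\subseteq S$ and $A$ is a cyclic flat of $M$, or $A=S\cup B$ where $B$ is a nonempty cyclic flat of $N$. The set $S$ is a cyclic flat of $L$ if and only if $M$ has no isthmus and $N$ has no loop.
   Context: For a matroid $M$ on $S$ write $\rho_M$ for rank, $\rho(M)=\rho_M(S)$, $\nu_M(A)=|A|-\rho_M(A)$, $\lambda_M(A)=\rho(M)-\rho_M(A)$. For matroids $M$ on $S$ and $N$ on $T$ with $S\cap T=\emptyset$, the free product $M\mathbin{\Box} N$ is the matroid on $S\cup T$ whose independent sets are those $A$ with $A\cap S$ independent in $M$ and $\lambda_M(A\cap S)\geq\nu_N(A\cap T)$. A cyclic flat is a flat that is a union of circuits (equivalently a flat $F$ with $M|F$ isthmusless). *)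

(* Defs.v *)
From mathcomp Require Import all_boot.
Set Implicit Arguments. Unset Strict Implicit. Unset Printing Implicit Defensive.

(* Matroids are given by a ground set E : {set U} inside a finite universe U
   together with an independence predicate I on subsets of U. *)
Section Matroids.
Variable U : finType.

Definition is_matroid (E : {set U}) (I : {set U} -> bool) : Prop :=
  [/\ (forall X : {set U}, I X -> X \subset E),
      I set0,
      (forall X Y : {set U}, Y \subset X -> I X -> I Y) &
      (forall X Y : {set U}, I X -> I Y -> #|X| < #|Y| ->
         exists2 y, y \in Y :\: X & I (y |: X))].

Definition rk (I : {set U} -> bool) (X : {set U}) : nat :=
  \max_(Y : {set U} | (Y \subset X) && I Y) #|Y|.

Definition nullity (I : {set U} -> bool) (A : {set U}) : nat := #|A| - rk I A.
Definition lambda (E : {set U}) (I : {set U} -> bool) (A : {set U}) : nat :=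
  rk I E - rk I A.

Definition flat (E : {set U}) (I : {set U} -> bool) (F : {set U}) : Prop :=
  F \subset E /\ forall x, x \in E :\: F -> rk I F < rk I (x |: F).

Definition circuit (E : {set U}) (I : {set U} -> bool) (C : {set U}) : Prop :=
  [/\ C \subset E, ~~ I C & forall x, x \in C -> I (C :\ x)].

Definition cyclic_flat (E : {set U}) (I : {set U} -> bool) (F : {set U}) : Prop :=
  flat E I F /\
  forall x, x \in F -> exists C : {set U}, [/\ circuit E I C, C \subset F & x \in C].

Definition isthmus (E : {set U}) (I : {set U} -> bool) (x : U) : Prop :=
  x \in E /\ rk I (E :\ x) < rk I E.

Definition loop (E : {set U}) (I : {set U} -> bool) (x : U) : Prop :=
  x \in E /\ ~~ I [set x].

Definition free_product_indep (S : {set U}) (IM : {set U} -> bool)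
    (T : {set U}) (IN : {set U} -> bool) (A : {set U}) : bool :=
  [&& A \subset S :|: T, IM (A :&: S) &
      nullity IN (A :&: T) <= lambda S IM (A :&: S)].

End Matroids.

(* Main.v *)
Require Import Defs.
From mathcomp Require Import all_boot.
From mathcomp Require Import zify.
Set Implicit Arguments. Unset Strict Implicit. Unset Printing Implicit Defensive.

Section Gen.
Variable U : finType.
Implicit Types (X Y Z A B C F : {set U}) (I : {set U} -> bool).

Lemma rk_le_card I X : rk I X <= #|X|.
Proof. apply/bigmax_leqP => Y /andP[sYX _]; exact: subset_leq_card. Qed.

Lemma rk_max I X Y : Y \subset X -> I Y -> #|Y| <= rk I X.
Proof.
move=> sYX iY; rewrite /rk.
apply: (@leq_bigmax_cond _ (fun Y : {set U} => (Y \subset X) && I Y) (fun Y : {set U} => #|Y|)).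
by rewrite sYX iY.
Qed.

Lemma rk_wit I X : I set0 -> exists2 Y : {set U}, (Y \subset X) && I Y & #|Y| = rk I X.
Proof.
move=> i0; rewrite /rk.
have : 0 < #|[pred Y : {set U} | (Y \subset X) && I Y]|.
  by apply/card_gt0P; exists set0; rewrite inE sub0set i0.
move=> /(eq_bigmax_cond (fun Y : {set U} => #|Y|)) [Y HY ->].
by exists Y.
Qed.

Lemma rk_indep I X : I X -> rk I X = #|X|.
Proof. move=> iX; apply/eqP; rewrite eqn_leq rk_le_card rk_max //. Qed.

Lemma rk_mono I X Y : I set0 -> X \subset Y -> rk I X <= rk I Y.
Proof.
move=> i0 sXY; have [Z /andP[sZX iZ] <-] := rk_wit X i0.
apply: rk_max iZ; exact: subset_trans sXY.
Qed.


Lemma rk_indepP I X : I set0 -> rk I X = #|X| -> I X.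
Proof.
move=> i0 e; have [Y /andP[sYX iY] eY] := rk_wit X i0.
have : Y == X by rewrite eqEcard sYX eY e leqnn.
by move/eqP <-.
Qed.

Lemma rk_del1 I X x : I set0 -> (forall X Y, Y \subset X -> I X -> I Y) ->
  rk I X <= (rk I (X :\ x)).+1.
Proof.
move=> i0 her; have [Y /andP[sYX iY] <-] := rk_wit X i0.
have h : #|Y :\ x| <= rk I (X :\ x).
  apply: rk_max; first by apply: setSD.
  by apply: her iY; apply: subD1set.
rewrite (cardsD1 x Y); case: (x \in Y) => /=; lia.
Qed.

Lemma rk_add1 I X x : I set0 -> (forall X Y, Y \subset X -> I X -> I Y) ->
  rk I (x |: X) <= (rk I X).+1.
Proof.
move=> i0 her; apply: leq_trans (rk_del1 (x |: X) x i0 her) _.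
rewrite ltnS; apply: rk_mono => //; apply/subsetP => z; rewrite !inE.
by case/andP => /negPf -> .
Qed.

Lemma rk_diff I X Y : I set0 -> (forall X Y, Y \subset X -> I X -> I Y) ->
  Y \subset X -> rk I X <= rk I Y + #|X :\: Y|.
Proof.
move=> i0 her sYX; have [W /andP[sWX iW] <-] := rk_wit X i0.
have h1 : #|W :&: Y| <= rk I Y.
  apply: rk_max; [exact: subsetIr | apply: her iW; exact: subsetIl].
have h2 : #|W :\: Y| <= #|X :\: Y| by apply: subset_leq_card; apply: setSD.
have := cardsID Y W; lia.
Qed.

Lemma nullity_mono I X Y : I set0 -> (forall X Y, Y \subset X -> I X -> I Y) ->
  Y \subset X -> nullity I Y <= nullity I X.
Proof.
move=> i0 her sYX; rewrite /nullity.
have := rk_diff i0 her sYX; have := rk_le_card I Y.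
have := cardsID Y X; rewrite (setIidPr sYX); lia.
Qed.

Section Mat.
Variables (E : {set U}) (I : {set U} -> bool).
Hypothesis mat : is_matroid E I.

Let i0 : I set0. Proof. by case: mat. Qed.
Let her : forall X Y, Y \subset X -> I X -> I Y. Proof. by case: mat. Qed.
Let aug : forall X Y, I X -> I Y -> #|X| < #|Y| ->
         exists2 y, y \in Y :\: X & I (y |: X). Proof. by case: mat. Qed.

Lemma rk_extend n X B0 : rk I X - #|B0| <= n -> I B0 -> B0 \subset X ->
  exists B, [/\ B0 \subset B, B \subset X, I B & #|B| = rk I X].
Proof.
elim: n B0 => [|n IH] B0 hn iB sB.
  exists B0; split => //; apply/eqP; rewrite eqn_leq rk_max //; lia.
case: (ltnP #|B0| (rk I X)) => hlt; last first.
  exists B0; split => //; apply/eqP; rewrite eqn_leq rk_max // hlt.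
have [W /andP[sWX iW] eW] := rk_wit X i0.
have hc : #|B0| < #|W| by rewrite eW.
have [y /setDP[yW ynB] iy] := aug iB iW hc.
have hc2 : rk I X - #|y |: B0| <= n by rewrite cardsU1 ynB /=; lia.
have hc3 : y |: B0 \subset X by rewrite subUset sub1set (subsetP sWX _ yW) sB.
have [B [s1 s2 s3 s4]] := IH (y |: B0) hc2 iy hc3.
exists B; split => //; apply: subset_trans s1; exact: subsetUr.
Qed.

Lemma rk_closure X Z : rk I X < rk I (X :|: Z) ->
  exists2 y, y \in Z & rk I X < rk I (y |: X).
Proof.
move=> h.
have [B /andP[sBX iB] eB] := rk_wit X i0.
have [W /andP[sWX iW] eW] := rk_wit (X :|: Z) i0.
have hc : #|B| < #|W| by rewrite eW eB.
have [y /setDP[yW ynB] iy] := aug iB iW hc.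
have c : #|y |: B| = (rk I X).+1 by rewrite cardsU1 ynB eB.
case yX: (y \in X).
  have : #|y |: B| <= rk I X by apply: rk_max iy; rewrite subUset sub1set yX.
  by rewrite c ltnn.
have yZ : y \in Z by move: (subsetP sWX _ yW); rewrite inE yX.
exists y => //; rewrite -c; apply: rk_max iy; exact: setUS.
Qed.

Lemma min_dep n C : #|C| <= n -> ~~ I C ->
  exists2 C' : {set U}, C' \subset C & ~~ I C' /\ forall z, z \in C' -> I (C' :\ z).
Proof.
elim: n C => [|n IH] C hn nC.
  move: hn; rewrite leqn0 cards_eq0 => /eqP eC; by rewrite eC i0 in nC.
case: (boolP [forall z in C, I (C :\ z)]) => [/forall_inP h|].
  by exists C.
rewrite negb_forall_in => /existsP [z /andP[zC nz]].
have hc : #|C :\ z| <= n by move: hn; rewrite (cardsD1 z C) zC; lia.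
have [C' s1 s2] := IH (C :\ z) hc nz.
exists C' => //; apply: subset_trans s1 _; exact: subD1set.
Qed.

Lemma circuit_rk F x : F \subset E -> x \in F ->
  (exists C, [/\ circuit E I C, C \subset F & x \in C]) <->
  rk I (F :\ x) = rk I F.
Proof.
move=> sFE xF; split.
  move=> [C [[sCE nC hC] sCF xC]].
  have iC := hC x xC.
  have sCx : C :\ x \subset F by apply: subset_trans sCF; exact: subD1set.
  have [B [s1 s2 s3 s4]] := rk_extend (leqnn _) iC sCx.
  case xB: (x \in B).
    have : C \subset B.
      apply/subsetP => z zC; case: (eqVneq z x) => [-> //|nzx].
      by apply: (subsetP s1); rewrite !inE nzx.
    by move=> /her /(_ s3); rewrite (negPf nC).
  apply/eqP; rewrite eqn_leq rk_mono ?subD1set //= -s4; apply: rk_max s3.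
  apply/subsetP => z zB; rewrite !inE (subsetP s2 _ zB) andbT.
  by apply: contraTneq zB => ->; rewrite xB.
move=> e.
have [B /andP[sB iB] eB] := rk_wit (F :\ x) i0.
have xnB : x \notin B.
  by apply/negP => xB; have := subsetP sB x xB; rewrite !inE eqxx.
have nB : ~~ I (x |: B).
  apply/negP => ixB.
  have : #|x |: B| <= rk I F.
    apply: rk_max ixB; rewrite subUset sub1set xF; apply: subset_trans sB _.
    exact: subD1set.
  by rewrite cardsU1 xnB eB e ltnn.
have [C sC [nC hC]] := min_dep (leqnn _) nB.
have xC : x \in C.
  apply/negPn/negP => xnC; move: nC; rewrite (her _ iB) //.
  apply/subsetP => z zC; have := subsetP sC z zC; rewrite !inE.
  by case/orP => // /eqP ez; move: zC; rewrite ez (negPf xnC).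
have sCF : C \subset F.
  apply: subset_trans sC _; rewrite subUset sub1set xF.
  apply: subset_trans sB _; exact: subD1set.
exists C; split => //; split => //; exact: subset_trans sFE.
Qed.

Definition cfr F := [/\ F \subset E,
  (forall x, x \in E :\: F -> rk I F < rk I (x |: F)) &
  (forall x, x \in F -> rk I (F :\ x) = rk I F)].

Lemma cyclic_flatE F : cyclic_flat E I F <-> cfr F.
Proof.
split.
  move=> [[sFE fl] cy]; split => // x xF; apply/(circuit_rk sFE xF); exact: cy.
move=> [sFE fl cy]; split => // x xF; apply/(circuit_rk sFE xF); exact: cy.
Qed.

End Mat.

Lemma subset_card_exists X k : k <= #|X| -> exists2 D : {set U}, D \subset X & #|D| = k.
Proof.
elim: k => [|k IH] hk; first by exists set0; rewrite ?sub0set ?cards0.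
have [D sD eD] := IH (ltnW hk).
have : 0 < #|X :\: D| by rewrite cardsD (setIidPr sD) eD; lia.
case/card_gt0P => y /setDP[yX ynD].
exists (y |: D); first by rewrite subUset sub1set yX.
by rewrite cardsU1 ynD eD.
Qed.

End Gen.
Section FP.
Variable U : finType.
Variables (S T : {set U}) (IM IN : {set U} -> bool).
Hypotheses (matM : is_matroid S IM) (matN : is_matroid T IN) (dis : [disjoint S & T]).
Implicit Types (X Y Z A B C D F : {set U}).

Let iM0 : IM set0. Proof. by case: matM. Qed.
Let herM : forall X Y, Y \subset X -> IM X -> IM Y. Proof. by case: matM. Qed.
Let augM : forall X Y, IM X -> IM Y -> #|X| < #|Y| ->
         exists2 y, y \in Y :\: X & IM (y |: X). Proof. by case: matM. Qed.
Let subM : forall X, IM X -> X \subset S. Proof. by case: matM. Qed.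
Let iN0 : IN set0. Proof. by case: matN. Qed.
Let herN : forall X Y, Y \subset X -> IN X -> IN Y. Proof. by case: matN. Qed.

Let fpi := free_product_indep S IM T IN.
Let m := rk IM S.

Lemma dST z : (z \in S) ==> (z \notin T).
Proof. by apply/implyP => zS; rewrite (disjointFr dis zS). Qed.

Lemma impl (b c : bool) : (b -> c) -> b ==> c.
Proof. by case: b => //= ->. Qed.

Lemma card_split Z : Z \subset S :|: T -> #|Z| = #|Z :&: S| + #|Z :&: T|.
Proof.
move=> sZ; rewrite -(cardsID S Z); congr (_ + _); apply: eq_card => z.
move: (impl (subsetP sZ z)) (dST z); rewrite !inE.
by case: (z \in Z); case: (z \in S); case: (z \in T).
Qed.

Lemma interUS X Y : X \subset S -> Y \subset T -> (X :|: Y) :&: S = X.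
Proof.
move=> sX sY; apply/setP => z; rewrite !inE; move: (impl (subsetP sX z)) (impl (subsetP sY z)) (dST z).
by case: (z \in X); case: (z \in Y); case: (z \in S); case: (z \in T).
Qed.

Lemma interUT X Y : X \subset S -> Y \subset T -> (X :|: Y) :&: T = Y.
Proof.
move=> sX sY; apply/setP => z; rewrite !inE; move: (impl (subsetP sX z)) (impl (subsetP sY z)) (dST z).
by case: (z \in X); case: (z \in Y); case: (z \in S); case: (z \in T).
Qed.

Lemma setU1I_in y A D : y \in D -> (y |: A) :&: D = y |: (A :&: D).
Proof. by move=> yD; apply/setP => z; rewrite !inE; case: (eqVneq z y) => [->|]. Qed.

Lemma setU1I_out y A D : y \notin D -> (y |: A) :&: D = A :&: D.
Proof.
move=> yD; apply/setP => z; rewrite !inE; case: (eqVneq z y) => [->|] //=.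
by rewrite (negPf yD) andbF.
Qed.

Lemma fp_matroid : is_matroid (S :|: T) fpi.
Proof.
split.
- by move=> X /and3P[].
- rewrite /fpi /free_product_indep sub0set !set0I iM0 /nullity cards0 //.
- move=> X Y sYX /and3P[sX iXS nX]; apply/and3P; split.
  + exact: subset_trans sX.
  + by apply: herM iXS; apply: setSI.
  + apply: leq_trans (nullity_mono iN0 herN (setSI T sYX)) _.
    apply: leq_trans nX _; rewrite /lambda leq_sub2l // rk_mono //; exact: setSI.
move=> I J /and3P[sI iIS nI] /and3P[sJ iJS nJ] hlt.
set IS := I :&: S in iIS nI *; set IT := I :&: T in nI *.
set JS := J :&: S in iJS nJ *; set JT := J :&: T in nJ *.
have eIS := rk_indep iIS; have eJS := rk_indep iJS.
have hIS : #|IS| <= m by apply: rk_max iIS; exact: subsetIr.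
have hJS : #|JS| <= m by apply: rk_max iJS; exact: subsetIr.
have cI := card_split sI; have cJ := card_split sJ.
rewrite -/IS -/IT in cI; rewrite -/JS -/JT in cJ.
have rIT := rk_le_card IN IT; have rJT := rk_le_card IN JT.
move: nI nJ; rewrite /nullity /lambda eIS eJS -/m => nI nJ.
case: (ltnP (#|IT| - rk IN IT) (m - #|IS|)) => slack.
  case: (boolP (JT \subset IT)) => sub.
    have hc : #|IS| < #|JS| by have := subset_leq_card sub; move: cI cJ hlt; clear; lia.
    have [y /setDP[yJS ynIS] iy] := augM iIS iJS hc.
    have yS : y \in S by move: yJS; rewrite inE => /andP[].
    have yJ : y \in J by move: yJS; rewrite inE => /andP[].
    have ynT : y \notin T by move: (dST y); rewrite yS.
    have ynI : y \notin I by apply: contra ynIS => yI; rewrite inE yI yS.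
    exists y; first by rewrite inE yJ ynI.
    apply/and3P; split.
    + by rewrite subUset sub1set inE yS.
    + by rewrite setU1I_in.
    + rewrite (setU1I_in _ yS) (setU1I_out _ ynT) -/IS -/IT /nullity /lambda -/m.
      rewrite (rk_indep iy) cardsU1 ynIS /=; move: slack; clear; lia.
  case/subsetPn: sub => y yJT ynIT.
  have yT : y \in T by move: yJT; rewrite inE => /andP[].
  have yJ : y \in J by move: yJT; rewrite inE => /andP[].
  have ynS : y \notin S by apply/negP => yS; move: (dST y); rewrite yS yT.
  have ynI : y \notin I by apply: contra ynIT => yI; rewrite inE yI yT.
  exists y; first by rewrite inE yJ ynI.
  apply/and3P; split.
  + by rewrite subUset sub1set inE yT orbT.
  + by rewrite setU1I_out.
  + rewrite (setU1I_out _ ynS) (setU1I_in _ yT) -/IS -/IT /nullity /lambda -/m eIS.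
    have := rk_mono iN0 (subsetUr [set y] IT).
    rewrite cardsU1 ynIT /=; move: slack; clear; lia.
case: (boolP [exists y in JT, rk IN IT < rk IN (y |: IT)]).
  case/exists_inP => y yJT hy.
  have yT : y \in T by move: yJT; rewrite inE => /andP[].
  have yJ : y \in J by move: yJT; rewrite inE => /andP[].
  have ynS : y \notin S by apply/negP => yS; move: (dST y); rewrite yS yT.
  have ynIT : y \notin IT by apply/negP => yI; move: hy; rewrite (setUidPr _) ?ltnn // sub1set.
  have ynI : y \notin I by apply: contra ynIT => yI; rewrite inE yI yT.
  exists y; first by rewrite inE yJ ynI.
  apply/and3P; split.
  + by rewrite subUset sub1set inE yT orbT.
  + by rewrite setU1I_out.
  + rewrite (setU1I_out _ ynS) (setU1I_in _ yT) -/IS -/IT /nullity /lambda -/m eIS.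
    have := rk_le_card IN (y |: IT).
    rewrite cardsU1 ynIT /=; move: hy nI rIT; clear; lia.
rewrite negb_exists_in => /forall_inP hno.
have hcl : rk IN (IT :|: JT) <= rk IN IT.
  rewrite leqNgt; apply/negP => /(rk_closure matN) [y yJT hy].
  by move: (hno y yJT); rewrite hy.
have := rk_mono iN0 (subsetUr IT JT).
move: hcl slack nI nJ cI cJ hlt hIS hJS rIT rJT; clear; lia.
Qed.


Let R := rk fpi.

Lemma R_formula X Y : X \subset S -> Y \subset T ->
  R (X :|: Y) = minn (rk IM X + #|Y|) (m + rk IN Y).
Proof.
move=> sX sY; apply/eqP; rewrite eqn_leq; apply/andP; split.
  apply/bigmax_leqP => Z /andP[sZ /and3P[sZST iZS nZ]].
  have sZS : Z :&: S \subset X by rewrite -(interUS sX sY); apply: setSI.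
  have sZT : Z :&: T \subset Y by rewrite -(interUT sX sY); apply: setSI.
  have cZ := card_split sZST.
  have e1 := rk_indep iZS.
  have h1 : #|Z :&: S| <= rk IM X := rk_max sZS iZS.
  have h2 := subset_leq_card sZT.
  have h3 := rk_mono iN0 sZT.
  have h4 : #|Z :&: S| <= m := rk_max (subsetIr Z S) iZS.
  have h5 := rk_le_card IN (Z :&: T).
  move: nZ; rewrite /nullity /lambda e1 -/m => nZ.
  rewrite leq_min; move: cZ h1 h2 h3 h4 h5 nZ; clear.
  move=> *; apply/andP; split; lia.
have [Iw /andP[sIw iIw] eIw] := rk_wit X iM0.
have [Bw /andP[sBw iBw] eBw] := rk_wit Y iN0.
have sIwS : Iw \subset S := subset_trans sIw sX.
have hX : rk IM X <= m := rk_mono iM0 sX.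
case: (leqP (rk IM X + #|Y|) (m + rk IN Y)) => h.

  have fZ : fpi (Iw :|: Y).
    apply/and3P; split.
    - exact: setUSS.
    - by rewrite interUS.
    - rewrite interUS // interUT // /nullity /lambda -/m (rk_indep iIw) eIw.
      move: h; clear; lia.
  have := rk_max (setUSS sIw (subxx Y)) fZ.
  rewrite (card_split (setUSS sIwS sY)) interUS // interUT // eIw.
  by [].

have sBwT := subset_trans sBw sY.
have hk : m - rk IM X <= #|Y :\: Bw|.
  rewrite cardsD (setIidPr sBw) eBw; move: h hX; clear; lia.
have [D sD eD] := subset_card_exists hk.
have sDY : D \subset Y := subset_trans sD (subsetDl Y Bw).
have disBD : Bw :&: D = set0.
  apply/setP => z; rewrite !inE; apply/negP => /andP[zB zD].
  by move: (subsetP sD z zD); rewrite inE zB.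
have cBD : #|Bw :|: D| = #|Bw| + #|D| by rewrite cardsU disBD cards0 subn0.
have sBDY : Bw :|: D \subset Y by rewrite subUset sBw sDY.
have sBDT := subset_trans sBDY sY.
have fZ : fpi (Iw :|: (Bw :|: D)).
  apply/and3P; split.
  - exact: setUSS.
  - by rewrite interUS.
  - rewrite interUS // interUT // /nullity /lambda -/m (rk_indep iIw) eIw.
    have := rk_max (subsetUl Bw D) iBw; rewrite cBD eD; move: hX; clear; lia.
have := rk_max (setUSS sIw sBDY) fZ.
rewrite (card_split (setUSS sIwS sBDT)) interUS // interUT // cBD eD eIw eBw.
rewrite -/R; move: hX; clear; lia.
Qed.

Lemma R_S B : B \subset S -> R B = rk IM B.
Proof.
move=> sB; have := R_formula sB (sub0set T); rewrite setU0 cards0 => ->.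
have := rk_le_card IN set0; have := rk_mono iM0 sB; rewrite cards0 -/m.
clear; lia.
Qed.

Lemma rk1 x : rk IN [set x] = IN [set x].
Proof.
case: (boolP (IN [set x])) => h; first by rewrite (rk_indep h) cards1.
move: (rk_le_card IN [set x]); rewrite cards1 leq_eqVlt => /orP[/eqP e|].
  by move: h; rewrite (rk_indepP iN0 (etrans e (esym (cards1 x)))).
by rewrite ltnS leqn0 => /eqP.
Qed.

Lemma setD1U_l X Y y : y \notin X -> (X :|: Y) :\ y = X :|: (Y :\ y).
Proof.
move=> h; apply/setP => z; rewrite !inE; case: (eqVneq z y) => [->|] /=.
  by rewrite (negPf h).
by [].
Qed.

Lemma setD1U_r X Y y : y \notin Y -> (X :|: Y) :\ y = (X :\ y) :|: Y.
Proof.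
move=> h; apply/setP => z; rewrite !inE; case: (eqVneq z y) => [->|] /=.
  by rewrite (negPf h).
by [].
Qed.

Lemma part2 : cfr (S :|: T) fpi S <->
  (forall x, ~ isthmus S IM x) /\ (forall x, ~ loop T IN x).
Proof.
split.
  move=> [_ fl cy]; split.
    move=> x [xS hlt]; have := cy x xS.
    rewrite -/R (R_S (subD1set S x)) (R_S (subxx S)) => e.
    by move: hlt; rewrite e ltnn.
  move=> x [xT nx].
  have xnS : x \notin S by apply/negP => xS; move: (dST x); rewrite xS xT.
  have hx : x \in (S :|: T) :\: S by rewrite !inE xnS xT orbT.
  have := fl x hx; rewrite -/R (R_S (subxx S)) (setUC [set x] S).
  rewrite (R_formula (subxx S)) ?sub1set // rk1 (negPf nx) -/m.
  clear; lia.
move=> [nis nlo]; split.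
- exact: subsetUl.
- move=> x; rewrite !inE => /andP[xnS xST].
  have xT : x \in T by move: xST; rewrite (negPf xnS).
  rewrite -/R (R_S (subxx S)) (setUC [set x] S).
  rewrite (R_formula (subxx S)) ?sub1set // rk1 -/m.
  case: (boolP (IN [set x])) => h; last by exfalso; apply: (nlo x); split.
  rewrite cards1 /=; clear; lia.
- move=> x xS; rewrite -/R (R_S (subD1set S x)) (R_S (subxx S)).
  apply/eqP; rewrite eqn_leq rk_mono ?subD1set //= leqNgt; apply/negP => h.
  by apply: (nis x); split.
Qed.

Lemma part1 A : A \subset S :|: T -> A != S ->
  (cfr (S :|: T) fpi A <->
   (A \subset S /\ cfr S IM A) \/
   (exists B, [/\ B != set0, cfr T IN B & A = S :|: B])).
Proof.
move=> sA nAS.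
set X := A :&: S; set Y := A :&: T.
have eA : A = X :|: Y by rewrite /X /Y -setIUr (setIidPl sA).
have sX : X \subset S := subsetIr A S.
have sY : Y \subset T := subsetIr A T.
have hXm : rk IM X <= m := rk_mono iM0 sX.
split.
  move=> [_ fl cy]; rewrite -/R in fl cy.
  case: (eqVneq Y set0) => Y0.
    left; have eAX : A = X by rewrite eA Y0 setU0.
    rewrite eAX in fl cy *; split => //; split => //.
      move=> x; rewrite inE => /andP[xnX xS].
      have hx : x \in (S :|: T) :\: X by rewrite in_setD in_setU xnX xS.
      have := fl x hx; rewrite (R_S sX) R_S //.
      by rewrite subUset sub1set xS sX.
    move=> x xX; have := cy x xX; rewrite (R_S sX) R_S //.
    exact: subset_trans (subD1set X x) sX.
  right.
  case/set0Pn: Y0 => y yY.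
  have yT : y \in T by apply: (subsetP sY).
  have ynS : y \notin S by apply/negP => yS; move: (dST y); rewrite yS yT.
  have ynX : y \notin X by apply: contra ynS; apply: (subsetP sX).
  have yA : y \in A by rewrite eA inE yY orbT.
  have := cy y yA; rewrite eA (setD1U_l _ ynX).
  rewrite (R_formula sX (subset_trans (subD1set Y y) sY)) (R_formula sX sY) -/m.
  have := rk_mono iN0 (subD1set Y y); have := rk_le_card IN Y.
  have := cardsD1 y Y; rewrite yY /=.
  move=> c1 c2 c3 e.
  have P1 : m + rk IN Y < rk IM X + #|Y| by move: hXm c1 c2 c3 e; clear; lia.
  have sSX : S \subset X.
    apply/subsetP => x xS; apply/negPn/negP => xnX.
    have xnT : x \notin T by move: (dST x); rewrite xS.
    have xnY : x \notin Y by apply: contra xnT; apply: (subsetP sY).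
    have hx : x \in (S :|: T) :\: A by rewrite eA in_setD !in_setU (negPf xnX) (negPf xnY) xS.
    have := fl x hx; rewrite eA setUA.
    rewrite (R_formula sX sY) (R_formula _ sY); last by rewrite subUset sub1set xS sX.
    move: P1; clear; lia.
  have eXS : X = S by apply/eqP; rewrite eqEsubset sX sSX.
  have rX : rk IM X = m by rewrite eXS.
  exists Y; split; [by apply/set0Pn; exists y | | by rewrite eXS].
  split => //.
    move=> x; rewrite inE => /andP[xnY xT].
    have xnS : x \notin S by apply/negP => xS; move: (dST x); rewrite xS xT.
    have xnX : x \notin X by rewrite eXS.
    have hx : x \in (S :|: T) :\: A by rewrite eA in_setD !in_setU (negPf xnX) (negPf xnY) xT orbT.
    have := fl x hx; rewrite eA setUCA.
    rewrite (R_formula sX sY) (R_formula sX); last by rewrite subUset sub1set xT sY.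
    rewrite cardsU1 xnY rX; move: P1; rewrite rX; clear; lia.
  move=> z zY.
  have zT : z \in T by apply: (subsetP sY).
  have znS : z \notin S by apply/negP => zS; move: (dST z); rewrite zS zT.
  have znX : z \notin X by rewrite eXS.
  have zA : z \in A by rewrite eA inE zY orbT.
  have := cy z zA; rewrite eA (setD1U_l _ znX).
  rewrite (R_formula sX (subset_trans (subD1set Y z) sY)) (R_formula sX sY) rX.
  have := rk_mono iN0 (subD1set Y z); have := rk_le_card IN (Y :\ z).
  move: P1; rewrite rX; clear; lia.
case.
  move=> [sAS [_ fl cy]].
  have [x0 x0S x0nA] : exists2 x0, x0 \in S & x0 \notin A.
    by apply/subsetPn; apply: contra nAS => sSA; rewrite eqEsubset sAS sSA.
  have hAm : rk IM A < m.
    have hx0 : x0 \in S :\: A by rewrite inE x0nA x0S.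
    have := fl x0 hx0.
    have hs : x0 |: A \subset S by rewrite subUset sub1set x0S sAS.
    have := rk_mono iM0 hs; rewrite -/m.
    clear; lia.
  split => //; rewrite -/R.
    move=> x; rewrite !inE => /andP[xnA xST].
    case xS: (x \in S).
      rewrite (R_S sAS) R_S; last by rewrite subUset sub1set xS sAS.
      by apply: fl; rewrite in_setD xnA xS.
    have xT : x \in T by move: xST; rewrite xS.
    rewrite (setUC [set x] A) (R_S sAS) (R_formula sAS) ?sub1set // cards1 -/m.
    move: hAm; clear; lia.
  move=> x xA; rewrite (R_S sAS) R_S; first exact: cy.
  exact: subset_trans (subD1set A x) sAS.
move=> [B [Bn0 [sBT flB cyB] eAB]].
rewrite eAB; split.
- exact: setUS.
- rewrite -/R.
  case/set0Pn: Bn0 => y yB.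
  have hB : rk IN B < #|B|.
    have := cyB y yB; have := rk_le_card IN (B :\ y); have := cardsD1 y B.
    rewrite yB; clear; lia.
  move=> x; rewrite !inE negb_or => /andP[/andP[xnS xnB] xST].
  have xT : x \in T by move: xST; rewrite (negPf xnS).
  rewrite setUCA (R_formula (subxx S) sBT) R_formula ?subxx //; last first.
    by rewrite subUset sub1set xT sBT.
  have hxB : x \in T :\: B by rewrite inE xnB xT.
  have := flB x hxB.
  rewrite cardsU1 xnB -/m; move: hB; clear; lia.
- rewrite -/R.
  case/set0Pn: Bn0 => y yB.
  have hB : rk IN B < #|B|.
    have := cyB y yB; have := rk_le_card IN (B :\ y); have := cardsD1 y B.
    rewrite yB; clear; lia.
  move=> x; rewrite inE => /orP[xS|xB].
    have xnT : x \notin T by move: (dST x); rewrite xS.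
    have xnB : x \notin B by apply: contra xnT; apply: (subsetP sBT).
    rewrite (setD1U_r _ xnB) (R_formula (subxx S) sBT).
    rewrite (R_formula (subD1set S x) sBT) -/m.
    have := rk_del1 S x iM0 herM; rewrite -/m.
    move: hB; clear; lia.
  have xT : x \in T by apply: (subsetP sBT).
  have xnS : x \notin S by apply/negP => xS; move: (dST x); rewrite xS xT.
  rewrite (setD1U_l _ xnS) (R_formula (subxx S) sBT).
  rewrite (R_formula (subxx S) (subset_trans (subD1set B x) sBT)) -/m (cyB x xB).
  have := cardsD1 x B; rewrite xB; move: hB; clear; lia.
Qed.

End FP.

Theorem proposition6p1 (U : finType) (S T : {set U})
    (IM IN : {set U} -> bool) :
  is_matroid S IM -> is_matroid T IN -> [disjoint S & T] ->
  (forall A : {set U}, A \subset S :|: T -> A != S ->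
     (cyclic_flat (S :|: T) (free_product_indep S IM T IN) A <->
      (A \subset S /\ cyclic_flat S IM A) \/
      (exists B : {set U}, [/\ B != set0, cyclic_flat T IN B & A = S :|: B])))
  /\
  (cyclic_flat (S :|: T) (free_product_indep S IM T IN) S <->
     (forall x, ~ isthmus S IM x) /\ (forall x, ~ loop T IN x)).
Proof.
move=> mM mN dis.
have mL := fp_matroid mM mN dis.
split.
  move=> A sA nAS; split.
    move/(cyclic_flatE mL)/(part1 mM mN dis sA nAS) => [[sAS h]|[B [Bn h e]]].
      by left; split; [done | apply/(cyclic_flatE mM)].
    by right; exists B; split => //; apply/(cyclic_flatE mN).
  move=> H; apply/(cyclic_flatE mL)/(part1 mM mN dis sA nAS).
  case: H => [[sAS h]|[B [Bn h e]]].
    by left; split; [done | apply/(cyclic_flatE mM)].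
  by right; exists B; split => //; apply/(cyclic_flatE mN).
split.
  by move/(cyclic_flatE mL)/(part2 mM mN dis).
by move/(part2 mM mN dis)/(cyclic_flatE mL).
Qed.
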